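(* Suppose the sequence $\{\mathcal{G}[k]\}_{k\ge0}$ satisfies the joint strong-connectivity assumption with parameter $T$. Then for every substate $j\in\{1,\dots,N\}$, under the freshness-index rules, $\tau^{(j)}_i[k]\le 2(N-1)T$ for all $k\ge (N-1)T$ and all $i\in\mathcal{V}$ (in particular these indices are finite by the preceding lemma).
   Context: Graphs. Nodes $\mathcal{V}=\{1,\dots,N\}$. At each time $k\in\mathbb{N}=\{0,1,2,\dots\}$ there is a directed graph $\mathcal{G}[k]=(\mathcal{V},\mathcal{E}[k])$; $(i,j)\in\mathcal{E}[k]$ means node $i$ can send information to node $j$ at time $k$. $\mathcal{N}_i[k]=\{l\neq i:(l,i)\in\mathcal{E}[k]\}$ is the set of neighbors of $i$ at time $k$. The union graph over an interval of times has vertex set $\mathcal{V}$ and edge set the union of the edge sets over that interval. Joint strong-connectivity assumption: there is $T\in\mathbb{N}_+=\{1,2,\dots\}$ such that for every $k\in\mathbb{N}$ the union graph over $[kT,(k+1)T)$ is strongly connected. Freshness indices. For each substate index $j\in\{1,\dots,N\}$ (node $j$ being the source node of substate $j$) and node $i$, node $i$ keeps $\tau^{(j)}_i[k]\in\{\omega\}\cup\mathbb{N}$, where $\omega$ is a special symbol. Initialization: $\tau^{(j)}_j[0]=0$, $\tau^{(j)}_i[0]=\omega$ for $i\neq j$. The source keeps $\tau^{(j)}_j[k]=0$ for all $k$. For $i\neq j$, let $\mathcal{M}^{(j)}_i[k]=\{l\in\mathcal{N}_i[k]:\tau^{(j)}_l[k]\neq\omega\}$. Case 1, $\tau^{(j)}_i[k]=\omega$: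 if $\mathcal{M}^{(j)}_i[k]\neq\emptyset$, let $u$ be any minimizer of $\tau^{(j)}_l[k]$ over $l\in\mathcal{M}^{(j)}_i[k]$ and set $\tau^{(j)}_i[k+1]=\tau^{(j)}_u[k]+1$; otherwise set $\tau^{(j)}_i[k+1]=\omega$. Case 2, $\tau^{(j)}_i[k]\neq\omega$: let $\mathcal{F}^{(j)}_i[k]=\{l\in\mathcal{M}^{(j)}_i[k]:\tau^{(j)}_l[k]<\tau^{(j)}_i[k]\}$; if nonempty, let $u$ be any minimizer of $\tau^{(j)}_l[k]$ over $\mathcal{F}^{(j)}_i[k]$ and set $\tau^{(j)}_i[k+1]=\tau^{(j)}_u[k]+1$; otherwise set $\tau^{(j)}_i[k+1]=\tau^{(j)}_i[k]+1$. *)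

(* Defs.v *)
From mathcomp Require Import all_boot.
Set Implicit Arguments. Unset Strict Implicit. Unset Printing Implicit Defensive.

(* Nodes are 'I_N. A time-varying graph is E : nat -> rel 'I_N,
   with E k a b meaning (a,b) is an edge at time k (a can send to b). *)

Definition nbr (N : nat) (E : nat -> rel 'I_N) (k : nat) (i l : 'I_N) : bool :=
  (l != i) && E k l i.

Definition union_graph (N : nat) (E : nat -> rel 'I_N) (a b : nat) : rel 'I_N :=
  fun x y => [exists t : 'I_(b - a), E (a + t) x y].

Definition strongly_connected (N : nat) (e : rel 'I_N) : Prop :=
  forall x y : 'I_N, connect e x y.

Definition jointly_strongly_connected (N : nat) (E : nat -> rel 'I_N) (T : nat) : Prop :=
  0 < T /\ forall k : nat, strongly_connected (union_graph E (k * T) (k.+1 * T)).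

(* Freshness indices: option nat, with None standing for the symbol omega.
   tau k i = tau^{(j)}_i[k]. The update rule (with "any minimizer u") is
   expressed as a relation on the trajectory. *)
Definition fresh_update (N : nat) (E : nat -> rel 'I_N)
    (tau : nat -> 'I_N -> option nat) (k : nat) (i : 'I_N) : Prop :=
  match tau k i with
  | None =>
      ((exists l t, nbr E k i l /\ tau k l = Some t) ->
        exists u tu, [/\ nbr E k i u, tau k u = Some tu,
          (forall l t, nbr E k i l -> tau k l = Some t -> tu <= t)
          & tau k.+1 i = Some tu.+1]) /\
      (~ (exists l t, nbr E k i l /\ tau k l = Some t) -> tau k.+1 i = None)
  | Some ti =>
      ((exists l t, [/\ nbr E k i l, tau k l = Some t & t < ti]) ->
        exists u tu, [/\ nbr E k i u, tau k u = Some tu, tu < ti,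
          (forall l t, nbr E k i l -> tau k l = Some t -> t < ti -> tu <= t)
          & tau k.+1 i = Some tu.+1]) /\
      (~ (exists l t, [/\ nbr E k i l, tau k l = Some t & t < ti]) ->
        tau k.+1 i = Some ti.+1)
  end.

Definition fresh_trajectory (N : nat) (E : nat -> rel 'I_N) (j : 'I_N)
    (tau : nat -> 'I_N -> option nat) : Prop :=
  [/\ tau 0 j = Some 0,
      (forall i, i != j -> tau 0 i = None),
      (forall k, tau k j = Some 0)
    & (forall k i, i != j -> fresh_update E tau k i)].

(* Main.v *)
From Stdlib Require Import Classical.
Require Import Defs.
From mathcomp Require Import all_boot.
From mathcomp Require Import zify.

Set Implicit Arguments. Unset Strict Implicit. Unset Printing Implicit Defensive.

Definition Rb (N : nat) (tau : nat -> 'I_N -> option nat) (s k : nat) (i : 'I_N) : bool :=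
  if tau k i is Some t then t + s <= k else false.

Lemma persist N (E : nat -> rel 'I_N) j tau s k i :
  fresh_trajectory E j tau -> Rb tau s k i -> Rb tau s k.+1 i.
Proof.
case=> _ _ h0 upd.
case: (eqVneq i j) => [->|nij].
  by rewrite /Rb !h0 /= => H; apply: leq_trans H _.
have := upd k i nij; rewrite /fresh_update /Rb.
case: (tau k i) => [ti|] //.
move=> [H1 H2] Hti.
destruct (classic (exists l t, [/\ nbr E k i l, tau k l = Some t & t < ti])) as [Hex|Hn].
  have [u [tu [_ _ ltu _ ->]]] := H1 Hex. lia.
rewrite (H2 Hn). lia.
Qed.

Lemma persist_le N (E : nat -> rel 'I_N) j tau s k i d :
  fresh_trajectory E j tau -> Rb tau s k i -> Rb tau s (k + d) i.
Proof.
move=> ft H; elim: d => [|d IH]; first by rewrite addn0.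
by rewrite addnS; apply: persist ft IH.
Qed.

Lemma propag N (E : nat -> rel 'I_N) j tau s k i l :
  fresh_trajectory E j tau -> E k l i -> Rb tau s k l -> Rb tau s k.+1 i.
Proof.
move=> ft Ekli Hl.
case: (eqVneq l i) => [<-|nli]; first exact: persist ft Hl.
have ft' := ft; case: ft' => _ _ h0 upd.
case: (eqVneq i j) => [->|nij].
  rewrite /Rb h0 /=. move: Hl; rewrite /Rb. case: (tau k l) => // tl. lia.
have nb : nbr E k i l by rewrite /nbr nli Ekli.
move: Hl; rewrite /Rb. case Htl: (tau k l) => [tl|] // Hl.
have := upd k i nij; rewrite /fresh_update.
case Hti: (tau k i) => [ti|].
  move=> [H1 H2].
  destruct (classic (exists l t, [/\ nbr E k i l, tau k l = Some t & t < ti])) as [Hex|Hn].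
    have [u [tu [_ _ ltu Hmin ->]]] := H1 Hex.
    case: (ltnP tl ti) => lt.
      have := Hmin l tl nb Htl lt. lia.
    lia.
  rewrite (H2 Hn).
  case: (ltnP tl ti) => lt.
    by exfalso; apply: Hn; exists l, tl.
  lia.
move=> [H1 _].
have [u [tu [_ _ Hmin ->]]] := H1 (ex_intro _ l (ex_intro _ tl (conj nb Htl))).
have := Hmin l tl nb Htl. lia.
Qed.

Lemma crossing (X : finType) (e : rel X) (p : pred X) x y :
  connect e x y -> p x -> ~~ p y -> exists u v, [/\ e u v, p u & ~~ p v].
Proof.
move/connectP=> [q Hq ->].
elim: q x Hq => [|z q IH] x /=.
  by move=> _ px npx; rewrite px in npx.
move/andP=> [exz Hq] px nl.
case pz: (p z); first exact: IH Hq pz nl.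
by exists x, z; rewrite pz.
Qed.

Theorem lemma5 (N T : nat) (E : nat -> rel 'I_N) :
  jointly_strongly_connected E T ->
  forall (j : 'I_N) (tau : nat -> 'I_N -> option nat),
    fresh_trajectory E j tau ->
    forall (k : nat) (i : 'I_N), (N - 1) * T <= k ->
      exists t, tau k i = Some t /\ t <= 2 * (N - 1) * T.
Proof.
move=> [T0 conn] j tau ft k i hk.
have ft' := ft; case: ft' => _ _ h0 _.
case: (eqVneq i j) => [->|nij]; first by exists 0; rewrite h0.
have N2 : 1 < N.
  case: (ltnP 1 N) => // hN; exfalso; move: nij; apply/negP; rewrite negbK.
  apply/eqP/val_inj => /=. have := ltn_ord i. have := ltn_ord j. lia.
set q := k %/ T. set r := k %% T.
have kqr : k = q * T + r by rewrite /q /r -divn_eq.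
have rT : r < T by rewrite /r ltn_pmod.
have Nq : N - 1 <= q.
  rewrite -ltnS -(ltn_pmul2r T0) mulSn.
  apply: leq_ltn_trans hk _. rewrite kqr addnC ltn_add2r //.
set m := q - (N - 1).
set s := m * T.
pose S c := [set x | Rb tau s ((m + c) * T) x].
have jS : forall c, j \in S c.
  move=> c; rewrite inE /Rb h0 /s add0n leq_pmul2r // leq_addr //.
have subS : forall c, S c \subset S c.+1.
  move=> c; apply/subsetP => x; rewrite !inE => H.
  by have := persist_le (T) ft H; rewrite addnS mulSn addnC.
have card : forall c, minn c.+1 N <= #|S c|.
  elim=> [|c IH].
    have : 0 < #|S 0| by apply/card_gt0P; exists j.
    lia.
  case: (eqVneq (S c) setT) => [eqT|neT].
    have : S c.+1 = setT.
      apply/eqP; rewrite eqEsubset subsetT /=.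
      by rewrite -eqT subS.
    move=> ->; rewrite cardsT card_ord; lia.
  have [y ny] : exists y, y \notin S c.
    apply/existsP; move: neT; apply: contraR.
    rewrite negb_exists => /forallP H.
    by rewrite eqEsubset subsetT /=; apply/subsetP=> x _; have := H x; rewrite negbK.
  have [u [v [Euv pu npv]]] :=
    @crossing _ _ (fun x => x \in S c) _ _ (conn (m + c) j y) (jS c) ny.
  move: Euv => /existsP [[t ht] /= Et].
  have ltT : t < T.
    have e : (m + c).+1 * T - (m + c) * T = T by rewrite mulSn addnK.
    lia.
  have vS : v \in S c.+1.
    move: pu; rewrite !inE => pu.
    have := persist_le (t) ft pu => Hu.
    have := propag ft Et Hu => Hv.
    have := persist_le (T - t.+1) ft Hv.
    have e : ((m + c) * T + t).+1 + (T - t.+1) = (m + c.+1) * T.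
      by rewrite addnS mulSn; lia.
    by rewrite e.
  have pr : S c \proper S c.+1.
    by apply/properP; split; [exact: subS | exists v].
  have := proper_card pr. move: IH. move: #|S c| #|S c.+1| => a b. lia.
have full : S (N - 1) = setT.
  apply/eqP; rewrite eqEcard subsetT /= cardsT card_ord.
  have := card (N - 1). move: #|S (N - 1)| => a. lia.
have iS : i \in S (N - 1) by rewrite full inE.
move: iS; rewrite inE => Hi.
have le : (m + (N - 1)) * T <= k.
  rewrite /m subnK // kqr leq_addr //.
have := persist_le (k - (m + (N - 1)) * T) ft Hi.
rewrite subnKC // /Rb.
case: (tau k i) => [t|] // Ht.
exists t; split => //.
have e1 : s + (N - 1) * T = q * T by rewrite /s -mulnDl /m subnK.
have : (N - 1) * T >= T by rewrite leq_pmull //; lia.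
lia.
Qed.
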